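(* Let $X$ be a cubic vertex-transitive graph for which $1$ is a simple eigenvalue, let $\mathbf{z}$ be a $\pm1$ eigenvector for $1$, $V^+=\{x\mid\mathbf{z}(x)=1\}$, $V^-=\{x\mid \mathbf{z}(x)=-1\}$, and suppose $X[V^+]$ is the disjoint union of cycles $C_1,\dots,C_m$ and $X[V^-]$ is the disjoint union of cycles $D_1,\dots,D_m$, all of length $k$. Let $G$ be the contracted multigraph of $X$. Then every automorphism of $X$ induces an automorphism of $G$, so that $\mathrm{Aut}(X)\le \mathrm{Aut}(G)$, and every subgroup of $\mathrm{Aut}(X)$ acting transitively on $V(X)$ acts transitively on the arcs of $G$. In particular, $G$ is arc-transitive and bipartite.
   Context: The contracted multigraph $G$ of $X$ has $2m$ vertices $c_1,\dots,c_m,d_1,\dots,d_m$ (one for each cycle $C_i$ and each cycle $D_i$), and for each edge of $X$ joining a vertex of $C_i$ to a vertex of $D_r$ there is an edge of $G$ joining $c_i$ and $d_r$ (so parallel edges may occur). An arc of a multigraph is an edge together with a choice of direction. *)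

(* Defs.v *)
From HB Require Import structures.
From mathcomp Require Import all_boot all_order all_algebra all_fingroup.
Set Implicit Arguments. Unset Strict Implicit. Unset Printing Implicit Defensive.
Import Order.TTheory GRing.Theory Num.Theory.
Local Open Scope ring_scope.

Definition simple_graph (n : nat) (adj : rel 'I_n) : Prop :=
  symmetric adj /\ irreflexive adj.

Definition cubic (n : nat) (adj : rel 'I_n) : Prop :=
  forall x : 'I_n, #|[set y | adj x y]| = 3%N.

Definition AutX (n : nat) (adj : rel 'I_n) : {set {perm 'I_n}} :=
  [set g : {perm 'I_n} | [forall x, forall y, adj (g x) (g y) == adj x y]].

Definition vertex_transitive (n : nat) (adj : rel 'I_n) : Prop :=
  forall x y : 'I_n, exists2 g, g \in AutX adj & g x = y.

Definition adjmx (R : fieldType) (n : nat) (adj : rel 'I_n) : 'M[R]_n :=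
  \matrix_(i, j) (adj i j)%:R.

Definition induced_cycle (n : nat) (adj : rel 'I_n) (k : nat) (S : {set 'I_n}) : Prop :=
  (3 <= k)%N /\
  exists s : seq 'I_n,
    [/\ uniq s, size s = k, S = [set x in s] &
        forall x y, x \in s -> y \in s ->
          adj x y = (y == next s x) || (y == prev s x)].

Definition cycle_decomposition (n m k : nat) (adj : rel 'I_n)
    (U : {set 'I_n}) (Cs : 'I_m -> {set 'I_n}) : Prop :=
  [/\ forall i j, i != j -> [disjoint Cs i & Cs j],
      \bigcup_(i < m) Cs i = U,
      forall i j x y, i != j -> x \in Cs i -> y \in Cs j -> ~~ adj x y &
      forall i, induced_cycle adj k (Cs i)].

(* Contracted multigraph G: vertices c_i = inl i, d_i = inr i; the vertex w
   of G corresponds to the vertex set Gset C D w of X. *)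
Definition Gset (n m : nat) (C D : 'I_m -> {set 'I_n}) (w : 'I_m + 'I_m) : {set 'I_n} :=
  match w with inl i => C i | inr r => D r end.

(* Arcs of G: the arcs (u,v) of X with u, v of opposite sign under z (i.e.
   edges of X joining some C_i and some D_r, with a direction).  The arc (u,v)
   goes from the G-vertex containing u to the G-vertex containing v, and its
   reverse is (v,u). *)
Definition Garcs (R : ringType) (n : nat) (adj : rel 'I_n) (z : 'rV[R]_n)
    : {set 'I_n * 'I_n} :=
  [set a | adj a.1 a.2 && (z 0 a.1 != z 0 a.2)].

Definition arc_rev (n : nat) (a : 'I_n * 'I_n) : 'I_n * 'I_n := (a.2, a.1).

Definition autG (R : ringType) (n m : nat) (adj : rel 'I_n) (z : 'rV[R]_n)
    (C D : 'I_m -> {set 'I_n})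
    (phi : {perm 'I_m + 'I_m}) (psi : {perm 'I_n * 'I_n}) : Prop :=
  [/\ forall a, (psi a \in Garcs adj z) = (a \in Garcs adj z),
      forall a w, a \in Garcs adj z ->
        ((psi a).1 \in Gset C D (phi w)) = (a.1 \in Gset C D w),
      forall a w, a \in Garcs adj z ->
        ((psi a).2 \in Gset C D (phi w)) = (a.2 \in Gset C D w) &
      forall a, a \in Garcs adj z -> psi (arc_rev a) = arc_rev (psi a)].

Definition pairf (n : nat) (g : {perm 'I_n}) (a : 'I_n * 'I_n) : 'I_n * 'I_n :=
  (g a.1, g a.2).

Lemma pairf_inj (n : nat) (g : {perm 'I_n}) : injective (pairf g).
Proof.
move=> [a1 a2] [b1 b2] /= [/perm_inj -> /perm_inj ->]; by [].
Qed.

Definition pair_perm (n : nat) (g : {perm 'I_n}) : {perm 'I_n * 'I_n} :=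
  perm (@pairf_inj n g).

(* Main.v *)
Require Import Defs.
From HB Require Import structures.
From mathcomp Require Import all_boot all_order all_algebra all_fingroup.
From mathcomp Require Import zify.
Import Order.TTheory GRing.Theory Num.Theory.
Local Open Scope ring_scope.

Section S.
Variables (R : realFieldType) (n m k : nat) (adj : rel 'I_n)
  (z : 'rV[R]_n) (C D : 'I_m -> {set 'I_n}).
Hypotheses (Hsg : simple_graph adj) (Hcub : cubic adj)
  (Hrk : \rank (eigenspace (adjmx R adj) 1) = 1%N)
  (Hz : z *m adjmx R adj = z)
  (Hpm : forall x, z 0 x = 1 \/ z 0 x = -1)
  (HC : cycle_decomposition k adj [set x | z 0 x == 1] C)
  (HD : cycle_decomposition k adj [set x | z 0 x == -1] D).

Lemma one_neq_m1 : (1 : R) != -1.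
Proof.
by rewrite -subr_eq0 opprK -[1 + 1](natrD R 1 1) pnatr_eq0.
Qed.

Lemma z_neq0 x : z 0 x != 0.
Proof. by case: (Hpm x) => ->; rewrite ?oppr_eq0 oner_eq0. Qed.

Lemma opp_val x y : z 0 y != z 0 x -> z 0 y = - z 0 x.
Proof. by case: (Hpm x) (Hpm y) => -> [->|->]; rewrite ?opprK ?eqxx. Qed.

Lemma Gset_sign {w x} : x \in Gset C D w ->
  z 0 x = (if w is inl _ then 1 else -1).
Proof.
case: w => i /= Hx.
  case: HC => _ HU _ _.
  have : x \in \bigcup_(j < m) C j by apply/bigcupP; exists i.
  by rewrite HU inE => /eqP.
case: HD => _ HU _ _.
have : x \in \bigcup_(j < m) D j by apply/bigcupP; exists i.
by rewrite HU inE => /eqP.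
Qed.

Lemma Gset_ex x : exists w, x \in Gset C D w.
Proof.
case: (Hpm x) => h.
  case: HC => _ HU _ _.
  have : x \in \bigcup_(j < m) C j by rewrite HU inE h.
  by case/bigcupP => i _ hi; exists (inl i).
case: HD => _ HU _ _.
have : x \in \bigcup_(j < m) D j by rewrite HU inE h.
by case/bigcupP => i _ hi; exists (inr i).
Qed.

Lemma Gset_uniq {w1 w2 x} : x \in Gset C D w1 -> x \in Gset C D w2 -> w1 = w2.
Proof.
move=> h1 h2; move: (Gset_sign h1) (Gset_sign h2).
case: w1 w2 h1 h2 => [i|i] [j|j] /= h1 h2.
- case: (eqVneq i j) => [->//|ne] _ _.
  by case: HC => Hd _ _ _; rewrite (disjointFr (Hd _ _ ne) h1) in h2.
- by move=> -> /eqP; rewrite (negbTE one_neq_m1).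
- by move=> -> /eqP; rewrite eq_sym (negbTE one_neq_m1).
- case: (eqVneq i j) => [->//|ne] _ _.
  by case: HD => Hd _ _ _; rewrite (disjointFr (Hd _ _ ne) h1) in h2.
Qed.

Lemma Gset_adj {w1 w2 x y} : x \in Gset C D w1 -> y \in Gset C D w2 ->
  adj x y -> z 0 x = z 0 y -> w1 = w2.
Proof.
move=> h1 h2 hxy; rewrite (Gset_sign h1) (Gset_sign h2).
case: w1 w2 h1 h2 => [i|i] [j|j] /= h1 h2.
- case: (eqVneq i j) => [->//|ne] _.
  by case: HC => _ _ Hn _; move: (Hn _ _ _ _ ne h1 h2); rewrite hxy.
- by move/eqP; rewrite (negbTE one_neq_m1).
- by move/eqP; rewrite eq_sym (negbTE one_neq_m1).
- case: (eqVneq i j) => [->//|ne] _.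
  by case: HD => _ _ Hn _; move: (Hn _ _ _ _ ne h1 h2); rewrite hxy.
Qed.

Lemma Gset_cyc w : exists s : seq 'I_n, [/\ uniq s, Gset C D w = [set x in s],
  (0 < size s)%N &
  forall x y, x \in s -> y \in s -> adj x y = (y == next s x) || (y == prev s x)].
Proof.
case: w => i /=.
  case: HC => _ _ _ Hc; case: (Hc i) => k3 [s [us sz -> H]]; exists s; split => //.
  by rewrite sz; apply: leq_trans k3.
case: HD => _ _ _ Hc; case: (Hc i) => k3 [s [us sz -> H]]; exists s; split => //.
by rewrite sz; apply: leq_trans k3.
Qed.

Lemma Gset_n0 w : exists x, x \in Gset C D w.
Proof.
have [[|x s] [_ -> sz _]] := Gset_cyc w => //.
by exists x; rewrite inE mem_head.
Qed.

Lemma aut_adj {g} : g \in AutX adj -> forall x y, adj (g x) (g y) = adj x y.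
Proof.
rewrite inE => /forallP Hg x y.
by move/forallP: (Hg x) => /(_ y) /eqP.
Qed.

Lemma aut_inv {g} : g \in AutX adj -> g^-1%g \in AutX adj.
Proof.
move=> gA; rewrite inE; apply/forallP => x; apply/forallP => y.
by rewrite -(aut_adj gA) !permKV.
Qed.

Lemma aut_sign {g} : g \in AutX adj ->
  exists2 c : R, c != 0 & forall x, z 0 (g x) = c * z 0 x.
Proof.
move=> gA.
have [x0 _|none] := pickP (@predT 'I_n); last first.
  by exists 1; rewrite ?oner_eq0 // => x; move: (none x).
set zg := \row_x z 0 (g x).
have Hzg : zg *m adjmx R adj = zg.
  apply/rowP => x.
  transitivity ((z *m adjmx R adj) 0 (g x)); last by rewrite Hz !mxE.
  rewrite !mxE [RHS](reindex_inj (@perm_inj _ g)) /=.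
  by apply: eq_bigr => j _; rewrite !mxE (aut_adj gA).
set E := eigenspace (adjmx R adj) 1.
have zE : (z <= E)%MS by apply/eigenspaceP; rewrite scale1r.
have zgE : (zg <= E)%MS by apply/eigenspaceP; rewrite scale1r.
have z0 : z != 0.
  by apply/eqP => h; move: (z_neq0 x0); rewrite h mxE eqxx.
have EZ : (E <= z)%MS.
  have [_] := mxrank_leqif_sup zE.
  by rewrite rank_rV z0 Hrk eqxx => <-.
have /sub_rVP [c Hc] : (zg <= z)%MS := submx_trans zgE EZ.
have Hc' x : z 0 (g x) = c * z 0 x.
  by have := congr1 (fun M : 'rV[R]_n => M 0 x) Hc; rewrite !mxE.
exists c => //.
by apply/eqP => c0; move: (z_neq0 (g x0)); rewrite Hc' c0 mul0r eqxx.
Qed.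

Lemma opp_card x : #|[set y | adj x y && (z 0 y != z 0 x)]| = 1%N.
Proof.
set S := [set y | adj x y && (z 0 y == z 0 x)].
set O := [set y | adj x y && (z 0 y != z 0 x)].
have HSO : (#|S| + #|O| = 3)%N.
  rewrite -(Hcub x) -(cardsID [set y | z 0 y == z 0 x] [set y | adj x y]).
  congr (_ + _)%N; apply: eq_card => y; rewrite !inE //.
  by rewrite andbC.
have Hsum : z 0 x = z 0 x *+ #|S| - z 0 x *+ #|O|.
  rewrite -{1}Hz mxE.
  rewrite (eq_bigr (fun y => (if y \in S then z 0 x else 0) +
                              (if y \in O then - z 0 x else 0))); last first.
    move=> y _; rewrite mxE !inE (proj1 Hsg y x).
    case: (adj x y); last by rewrite mulr0 addr0.
    rewrite mulr1 /=; case: eqP => [->|/eqP ne]; first by rewrite addr0.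
    by rewrite add0r (opp_val _ _ ne).
  by rewrite big_split /= -!big_mkcond /= !sumr_const mulNrn.
have HS : #|S| = #|O|.+1.
  apply/eqP; rewrite -(eqr_nat R); apply/eqP.
  apply: (mulfI (z_neq0 x)); rewrite !mulr_natr mulrS.
  by apply/eqP; rewrite -subr_eq -Hsum eqxx.
by move: HSO; rewrite HS; lia.
Qed.

Lemma opp_ex x : exists y, adj x y /\ z 0 y != z 0 x.
Proof.
have /cards1P [y0 H] : #|[set y | adj x y && (z 0 y != z 0 x)]| == 1%N
  by rewrite opp_card.
have : y0 \in [set y | adj x y && (z 0 y != z 0 x)] by rewrite H set11.
by rewrite inE => /andP [h1 h2]; exists y0.
Qed.

Lemma opp_uniq x y1 y2 : adj x y1 -> z 0 y1 != z 0 x ->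
  adj x y2 -> z 0 y2 != z 0 x -> y1 = y2.
Proof.
move=> a1 n1 a2 n2.
have /cards1P [y0 H] : #|[set y | adj x y && (z 0 y != z 0 x)]| == 1%N
  by rewrite opp_card.
have : y1 \in [set y | adj x y && (z 0 y != z 0 x)] by rewrite inE a1.
have : y2 \in [set y | adj x y && (z 0 y != z 0 x)] by rewrite inE a2.
by rewrite H !inE => /eqP -> /eqP ->.
Qed.

Lemma Gset_conn {g w w' u v} : g \in AutX adj -> u \in Gset C D w ->
  v \in Gset C D w -> g u \in Gset C D w' -> g v \in Gset C D w'.
Proof.
move=> gA uw vw guw.
have [c c0 Hc] := aut_sign gA.
have [s [us Hs _ Hadj]] := Gset_cyc w.
rewrite Hs inE in uw; rewrite Hs inE in vw.
have := fconnect_cycle (cycle_next us) uw v; rewrite vw => /iter_findex <-.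
have Hin i : iter i (next s) u \in s.
  by elim: i => [|i IH] //=; rewrite mem_next.
elim: (findex _ _ _) => [|i IH] //=.
set y := iter i (next s) u in IH Hin *.
have ys : y \in s := Hin i.
have y's : next s y \in s by rewrite mem_next.
have ayy : adj y (next s y) by rewrite Hadj // eqxx.
have zyy : z 0 y = z 0 (next s y).
  have h1 : y \in Gset C D w by rewrite Hs inE.
  have h2 : next s y \in Gset C D w by rewrite Hs inE.
  by rewrite (Gset_sign h1) (Gset_sign h2).
have [w'' h''] := Gset_ex (g (next s y)).
suff -> : w' = w'' by [].
apply: (Gset_adj IH h''); first by rewrite (aut_adj gA).
by rewrite !Hc zyy.
Qed.

Definition phif (g : {perm 'I_n}) (w : 'I_m + 'I_m) :=
  odflt w [pick w' | [exists x in Gset C D w, g x \in Gset C D w']].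

Lemma phif_spec g w u : g \in AutX adj ->
  (g u \in Gset C D (phif g w)) = (u \in Gset C D w).
Proof.
move=> gA; rewrite /phif; case: pickP => [w1 /existsP [x1 /andP [x1w gx1]] | none] /=.
  apply/idP/idP => [gu | uw]; last exact: (Gset_conn gA x1w uw gx1).
  have [w2 uw2] := Gset_ex u.
  have := Gset_conn (aut_inv gA) gu gx1; rewrite !permK => /(_ w2 uw2) xw2.
  by rewrite (Gset_uniq x1w xw2).
exfalso.
have [x0 x0w] := Gset_n0 w.
have [w' h] := Gset_ex (g x0).
by move: (none w') => /existsP; apply; exists x0; rewrite x0w h.
Qed.

Lemma phif_inj g : g \in AutX adj -> injective (phif g).
Proof.
move=> gA w1 w2 e.
have [x xw] := Gset_n0 w1.
have := phif_spec g w1 x gA; rewrite xw e phif_spec // => xw2.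
exact: Gset_uniq xw xw2.
Qed.

Lemma arc_map g a b : g \in AutX adj -> a \in Garcs adj z -> b \in Garcs adj z ->
  g a.1 = b.1 -> pair_perm g a = b.
Proof.
move=> gA; rewrite /pair_perm permE /pairf.
case: a b => [a1 a2] [b1 b2]; rewrite !inE /= => /andP [a12 za] /andP [b12 zb] e.
have [c c0 Hc] := aut_sign gA.
congr pair; first by [].
apply: (opp_uniq b1) => //.
- by rewrite -e (aut_adj gA).
- by rewrite -e !Hc (inj_eq (mulfI c0)) eq_sym.
- by rewrite eq_sym.
Qed.

Hypothesis Hvt : vertex_transitive adj.

Lemma main_res :
  [/\
    (forall g, g \in AutX adj ->
       exists phi : {perm 'I_m + 'I_m},
         autG adj z C D phi (pair_perm g) /\
         (forall w u, (g u \in Gset C D (phi w)) = (u \in Gset C D w))),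
    (forall g h, g \in AutX adj -> h \in AutX adj ->
       {in Garcs adj z, pair_perm g =1 pair_perm h} -> g = h),
    (forall H : {group {perm 'I_n}}, H \subset AutX adj ->
       (forall x y : 'I_n, exists2 h, h \in H & h x = y) ->
       forall a b, a \in Garcs adj z -> b \in Garcs adj z ->
         exists2 h, h \in H & pair_perm h a = b),
    (forall a b, a \in Garcs adj z -> b \in Garcs adj z ->
       exists phi psi, autG adj z C D phi psi /\ psi a = b) &
    (exists col : 'I_m + 'I_m -> bool,
       forall a w w', a \in Garcs adj z -> a.1 \in Gset C D w ->
         a.2 \in Gset C D w' -> col w != col w')].
Proof.
have P1 : forall g, g \in AutX adj ->
       exists phi : {perm 'I_m + 'I_m},
         autG adj z C D phi (pair_perm g) /\
         (forall w u, (g u \in Gset C D (phi w)) = (u \in Gset C D w)).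
  move=> g gA; exists (perm (phif_inj g gA)).
  have [c c0 Hc] := aut_sign gA.
  split; [split|].
  - move=> [a1 a2]; rewrite !inE permE /pairf /= (aut_adj gA) !Hc.
    by rewrite (inj_eq (mulfI c0)).
  - by move=> [a1 a2] w _; rewrite !permE /pairf /= phif_spec.
  - by move=> [a1 a2] w _; rewrite !permE /pairf /= phif_spec.
  - by move=> [a1 a2] _; rewrite !permE /pairf /arc_rev.
  - by move=> w u; rewrite permE phif_spec.
split => //.
- move=> g h _ _ e; apply/permP => x.
  have [y [xy zy]] := opp_ex x.
  have : (x, y) \in Garcs adj z by rewrite inE /= xy eq_sym zy.
  by move/e => /(congr1 fst); rewrite !permE.
- move=> H sub tr a b aG bG.
  have [h hH hx] := tr a.1 b.1.
  exists h => //; apply: arc_map => //.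
  exact: (subsetP sub h hH).
- move=> a b aG bG.
  have [g gA ga] := Hvt a.1 b.1.
  have [phi [Hphi _]] := P1 g gA.
  by exists phi, (pair_perm g); split => //; apply: arc_map.
- exists (fun w => if w is inl _ then true else false).
  move=> [a1 a2] w w'; rewrite inE /= => /andP [_ ne].
  case: w w' => [i|i] [j|j] /Gset_sign h1 /Gset_sign h2 //=;
  by rewrite h1 h2 eqxx in ne.
Qed.

End S.

Theorem lemma4p2 (R : realFieldType) (n m k : nat) (adj : rel 'I_n)
  (z : 'rV[R]_n) (C D : 'I_m -> {set 'I_n}) :
  simple_graph adj -> cubic adj -> vertex_transitive adj ->
  \rank (eigenspace (adjmx R adj) 1) = 1%N ->
  z *m adjmx R adj = z ->
  (forall x, z 0 x = 1 \/ z 0 x = -1) ->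
  cycle_decomposition k adj [set x | z 0 x == 1] C ->
  cycle_decomposition k adj [set x | z 0 x == -1] D ->
  [/\
    (* every automorphism of X induces an automorphism of G *)
    (forall g, g \in AutX adj ->
       exists phi : {perm 'I_m + 'I_m},
         autG adj z C D phi (pair_perm g) /\
         (forall w u, (g u \in Gset C D (phi w)) = (u \in Gset C D w))),
    (* ... and distinct automorphisms of X induce distinct ones of G *)
    (forall g h, g \in AutX adj -> h \in AutX adj ->
       {in Garcs adj z, pair_perm g =1 pair_perm h} -> g = h),
    (* vertex-transitive subgroups of Aut(X) are arc-transitive on G *)
    (forall H : {group {perm 'I_n}}, H \subset AutX adj ->
       (forall x y : 'I_n, exists2 h, h \in H & h x = y) ->
       forall a b, a \in Garcs adj z -> b \in Garcs adj z ->
         exists2 h, h \in H & pair_perm h a = b),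
    (* G is arc-transitive *)
    (forall a b, a \in Garcs adj z -> b \in Garcs adj z ->
       exists phi psi, autG adj z C D phi psi /\ psi a = b) &
    (* G is bipartite *)
    (exists col : 'I_m + 'I_m -> bool,
       forall a w w', a \in Garcs adj z -> a.1 \in Gset C D w ->
         a.2 \in Gset C D w' -> col w != col w')].
Proof.
move=> H1 H2 H3 H4 H5 H6 H7 H8.
exact: (@main_res R n m k adj z C D H1 H2 H4 H5 H6 H7 H8 H3).
Qed.
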